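(* Let $\mathcal{X},\mathcal{Y},\mathcal{Z}$ be finite alphabets and $(X,Y,Z)\sim P_X(x)P_{Y|X}(y|x)P_{Z|X}(z|x)$. Define $\mathcal{A}_1$ as the set of all tuples $(R_I,R_S,R_J,R_L)$ such that, for some random variable $U$ on a finite alphabet $\mathcal{U}$ with $|\mathcal{U}|\le|\mathcal{Y}|+2$ forming a Markov chain $Z-X-Y-U$, $R_I+R_S\le I(Z;U)$, $R_J\ge I(Y;U)-I(Z;U)+R_I$, $R_L\ge I(X;U)-I(Z;U)+R_I$, $R_I\ge0$, $R_S\ge0$. Define $\mathcal{A}_2$ as the set of all tuples $(R_I,R_S,R_J,R_L)$ such that, for some random variables $U,V$ on finite alphabets $\mathcal{U},\mathcal{V}$ with $|\mathcal{U}|\le(|\mathcal{Y}|+2)(|\mathcal{Y}|+3)$ and $|\mathcal{V}|\le|\mathcal{Y}|+3$ forming a Markov chain $Z-X-Y-U-V$, $0\le R_I\le I(Z;V)$, $0\le R_S\le I(Z;U)-I(Z;V)$, $R_J\ge I(Y;U)-I(Z;U)+I(Z;V)$, $R_L\ge I(X;U)-I(Z;U)+I(Z;V)$. Then $\mathcal{A}_1=\mathcal{A}_2$.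
   Context: $P_X$ is a distribution on the finite set $\mathcal{X}$ and $P_{Y|X}$, $P_{Z|X}$ are channels from $\mathcal{X}$ to finite sets $\mathcal{Y}$, $\mathcal{Z}$. $I$ denotes mutual information (base-2 logarithms). *)

(* Defs.v *)
From HB Require Import structures.
From mathcomp Require Import all_boot all_order all_algebra.
From mathcomp Require Import reals exp.
Set Implicit Arguments. Unset Strict Implicit. Unset Printing Implicit Defensive.
Import Order.TTheory GRing.Theory Num.Theory.
Local Open Scope ring_scope.

Section InfoDefs.
Variable R : realType.

Definition log2 (x : R) : R := ln x / ln 2.

Definition is_pmf (T : finType) (p : T -> R) : Prop :=
  (forall t, 0 <= p t) /\ \sum_(t : T) p t = 1.

Definition is_channel (A B : finType) (W : A -> B -> R) : Prop :=
  forall a, is_pmf (W a).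

(* Mutual information I(f;g) (base 2) of the random variables f, g defined on
   a finite sample space T with pmf p; convention 0 log 0 = 0. *)
Definition minfo (T A B : finType) (p : T -> R) (f : T -> A) (g : T -> B) : R :=
  \sum_(a : A) \sum_(b : B)
    let pab := \sum_(t | (f t == a) && (g t == b)) p t in
    let pa := \sum_(t | f t == a) p t in
    let pb := \sum_(t | g t == b) p t in
    if pab == 0 then 0 else pab * log2 (pab / (pa * pb)).

(* Joint law of (X,Y,Z,U) with Z - X - Y - U:
   P_X(x) P_{Y|X}(y|x) P_{Z|X}(z|x) Q(u|y).  Sample point ((x,y,z),u). *)
Definition joint4 (X Y Z U : finType) (PX : X -> R) (PYX : X -> Y -> R)
  (PZX : X -> Z -> R) (Q : Y -> U -> R) : (X * Y * Z * U)%type -> R :=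
  fun t => let: (x, y, z, u) := t in PX x * PYX x y * PZX x z * Q y u.

Definition joint5 (X Y Z U V : finType) (PX : X -> R) (PYX : X -> Y -> R)
  (PZX : X -> Z -> R) (Q : Y -> U -> R) (S : U -> V -> R)
  : (X * Y * Z * U * V)%type -> R :=
  fun t => let: (x, y, z, u, v) := t in
    PX x * PYX x y * PZX x z * Q y u * S u v.

Definition A1 (X Y Z : finType) (PX : X -> R) (PYX : X -> Y -> R)
  (PZX : X -> Z -> R) (RI RS RJ RL : R) : Prop :=
  exists (nU : nat) (Q : Y -> 'I_nU -> R),
    (nU <= #|Y| + 2)%N /\ is_channel Q /\
    let p := joint4 PX PYX PZX Q in
    let IZU := minfo p (fun t => t.1.2) (fun t => t.2) in
    let IYU := minfo p (fun t => t.1.1.2) (fun t => t.2) in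
    let IXU := minfo p (fun t => t.1.1.1) (fun t => t.2) in
    [/\ RI + RS <= IZU, RJ >= IYU - IZU + RI, RL >= IXU - IZU + RI,
        RI >= 0 & RS >= 0].

Definition A2 (X Y Z : finType) (PX : X -> R) (PYX : X -> Y -> R)
  (PZX : X -> Z -> R) (RI RS RJ RL : R) : Prop :=
  exists (nU nV : nat) (Q : Y -> 'I_nU -> R) (S : 'I_nU -> 'I_nV -> R),
    (nU <= (#|Y| + 2) * (#|Y| + 3))%N /\ (nV <= #|Y| + 3)%N /\
    is_channel Q /\ is_channel S /\
    let p := joint5 PX PYX PZX Q S in
    let IZV := minfo p (fun t => t.1.1.2) (fun t => t.2) in
    let IZU := minfo p (fun t => t.1.1.2) (fun t => t.1.2) in
    let IYU := minfo p (fun t => t.1.1.1.2) (fun t => t.1.2) in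
    let IXU := minfo p (fun t => t.1.1.1.1) (fun t => t.1.2) in
    [/\ 0 <= RI <= IZV, 0 <= RS <= IZU - IZV,
        RJ >= IYU - IZU + IZV & RL >= IXU - IZU + IZV].

End InfoDefs.

(* Main.v *)
Require Import Defs.
Set Warnings "-notation-overridden,-ambiguous-paths".
From HB Require Import structures.
From mathcomp Require Import all_boot all_order all_algebra.
From mathcomp Require Import reals exp ring lra.
Import Order.TTheory GRing.Theory Num.Theory.
Local Open Scope ring_scope.
Set Implicit Arguments. Unset Strict Implicit. Unset Printing Implicit Defensive.

Section CarathS.
Variable R : realType.

Lemma sum_eq1c (T : finType) (c : T) (G : T -> R) :
  \sum_u (if c == u then G u else 0) = G c.
Proof.
rewrite (bigD1 c) //= eqxx big1 ?addr0 // => u /negbTE; rewrite eq_sym => ->.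
by [].
Qed.

Variables (U K : finType) (L : K -> U -> R).

Lemma kernel_vec (S : {set U}) : (#|K| < #|S|)%N ->
  exists d : U -> R, [/\ forall k, \sum_u L k u * d u = 0,
     forall u, u \notin S -> d u = 0 & exists2 u, u \in S & d u != 0].
Proof.
move=> HKS.
pose M : 'M[R]_(#|S|, #|K|) := \matrix_(i, j) L (enum_val j) (enum_val i).
have rk : (0 < \rank (kermx M))%N.
  by rewrite mxrank_ker subn_gt0; exact: leq_ltn_trans (rank_leq_col M) HKS.
have nz : kermx M != 0 by rewrite -mxrank_eq0 -lt0n.
have [i0 Hi0|H0] := pickP (fun i => row i (kermx M) != 0); last first.
  case/negP: nz; apply/eqP/row_matrixP => i; rewrite row0.
  by have := H0 i => /= /negbFE/eqP.
set v := row i0 (kermx M) in Hi0.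
have vM0 : v *m M = 0 by rewrite /v -row_mul mulmx_ker row0.
have [j0 Hj0|H1] := pickP (fun j => v 0 j != 0); last first.
  case/negP: Hi0; apply/eqP/rowP => j; rewrite [RHS]mxE.
  have := H1 j => /= /negbFE/eqP <-.
  by congr (v _ _); apply/val_inj.
exists (fun u => \sum_(i < #|S|) (if enum_val i == u then v 0 i else 0)).
split.
- move=> k.
  have := congr1 (fun A : 'rV_#|K| => A 0 (enum_rank k)) vM0.
  rewrite !mxE => E; rewrite -[RHS]E.
  under eq_bigr do rewrite mulr_sumr.
  rewrite exchange_big /=; apply: eq_bigr => i _.
  rewrite [M _ _]mxE enum_rankK mulrC.
  rewrite -(sum_eq1c (enum_val i) (fun u => L k u * v 0 i)).
  by apply: eq_bigr => u _; case: ifP; rewrite ?mulr0.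
- move=> u uS; apply: big1 => i _; case: eqP => // ei.
  by case/negP: uS; rewrite -ei; exact: enum_valP.
- exists (enum_val j0); first exact: enum_valP.
  rewrite (bigD1 j0) //= eqxx big1 ?addr0 // => i /negbTE ne.
  by rewrite (inj_eq enum_val_inj) ne.
Qed.


Variables (g w : U -> R).
Hypothesis Hw : forall d : U -> R,
  (forall k, \sum_u L k u * d u = 0) -> \sum_u w u * d u = 0.

Definition supp (a : U -> R) := [set u | a u != 0].

Definition good (a a' : U -> R) := [/\ forall u, 0 <= a' u,
     forall u, a u = 0 -> a' u = 0,
     forall k, \sum_u L k u * a' u = \sum_u L k u * a u &
     \sum_u g u * a' u <= \sum_u g u * a u].

Lemma step a : (forall u, 0 <= a u) -> (forall u, a u != 0 -> 0 < w u) ->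
  (#|K| < #|supp a|)%N -> exists a', good a a' /\ (#|supp a'| < #|supp a|)%N.
Proof.
move=> a0 aw HK.
have [d [dL dS [u0 u0S du0]]] := kernel_vec HK.
have dw := Hw dL.
pose e := if \sum_u g u * d u <= 0 then d else (fun u => - d u).
have eL : forall k, \sum_u L k u * e u = 0.
  move=> k; rewrite /e; case: ifP => // _.
  by under eq_bigr do rewrite mulrN; rewrite sumrN dL oppr0.
have eg : \sum_u g u * e u <= 0.
  rewrite /e; case: ifP => // /negbT; rewrite -ltNge => H.
  by under eq_bigr do rewrite mulrN; rewrite sumrN oppr_le0 ltW.
have eS : forall u, u \notin supp a -> e u = 0.
  by move=> u /dS; rewrite /e; case: ifP => _ ->; rewrite ?oppr0.
have ew : \sum_u w u * e u = 0.
  rewrite /e; case: ifP => _ //.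
  by under eq_bigr do rewrite mulrN; rewrite sumrN dw oppr0.
have eu0 : e u0 != 0 by rewrite /e; case: ifP; rewrite ?oppr_eq0.
have wpos : forall u, u \in supp a -> 0 < w u.
  by move=> u; rewrite inE; exact: aw.
have [u1 eu1|Hn] := pickP (fun u => e u < 0); last first.
  exfalso; move/negP: eu0; apply.
  have H0 : forall u, 0 <= w u * e u.
    move=> u; have := Hn u; rewrite /= ltNge => /negbFE eu.
    case: (boolP (u \in supp a)) => uS.
      by rewrite mulr_ge0 // ltW // wpos.
    by rewrite eS // mulr0.
  have := @psumr_eq0P _ _ predT _ (fun u _ => H0 u) ew u0 isT.
  by move/eqP; rewrite mulf_eq0 gt_eqF ?wpos //= => /eqP ->.
case: (@arg_minP _ _ _ u1 (fun u => e u < 0) (fun u => a u / - e u) eu1).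
move=> um eum Hmin.
set t := a um / - e um.
have t0 : 0 <= t by rewrite divr_ge0 // oppr_ge0 ltW.
have umS : um \in supp a.
  by apply/negPn/negP => /eS H; move: eum; rewrite H ltxx.
exists (fun u => a u + t * e u); split; first split.
- move=> u; case: (boolP (e u < 0)) => eu.
    have := Hmin u eu; rewrite ler_pdivlMr ?oppr_gt0 // => H.
    rewrite -/t in H *; nra.
  rewrite -leNgt in eu; rewrite addr_ge0 // mulr_ge0 //.
- move=> u au; rewrite au eS ?mulr0 ?addr0 // inE au eqxx //.
- move=> k; under eq_bigr do rewrite mulrDr.
  rewrite big_split /=; under [X in _ + X]eq_bigr do rewrite mulrCA.
  by rewrite -mulr_sumr eL mulr0 addr0.
- under eq_bigr do rewrite mulrDr.
  rewrite big_split /=; under [X in _ + X]eq_bigr do rewrite mulrCA.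
  by rewrite -mulr_sumr gerDl mulr_ge0_le0.
- have a'um : a um + t * e um = 0.
    rewrite /t invrN mulrN mulNr divfK ?subrr // lt_eqF //.
  rewrite [X in (_ < X)%N](cardsD1 um) umS add1n ltnS.
  apply: subset_leq_card; apply/subsetP => u; rewrite !inE => nz.
  apply/andP; split.
    by apply: contraNneq nz => ->; rewrite a'um.
  by apply: contraNneq nz => au; rewrite au eS ?mulr0 ?addr0 // inE au eqxx.
Qed.

Lemma good_refl a : (forall u, 0 <= a u) -> good a a.
Proof. by move=> a0; split=> //. Qed.

Lemma carath a : (forall u, 0 <= a u) -> (forall u, a u != 0 -> 0 < w u) ->
  exists a', good a a' /\ (#|supp a'| <= #|K|)%N.
Proof.
move: {2}#|supp a| (leqnn #|supp a|) => n; elim: n a => [|n IH] a Hn a0 aw.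
  by exists a; split; [exact: good_refl | exact: leq_trans Hn _].
case: (leqP #|supp a| #|K|) => Hle.
  by exists a; split=> //; exact: good_refl.
have [a' [[a'0 a'a a'L a'g] Hc]] := step a0 aw Hle.
have Hn' : (#|supp a'| <= n)%N by rewrite -ltnS; apply: leq_trans Hc Hn.
have aw' : forall u, a' u != 0 -> 0 < w u.
  by move=> u nz; apply: aw; apply/eqP => /a'a /eqP; rewrite (negbTE nz).
have [a'' [[a''0 a''a a''L a''g] Hc']] := IH a' Hn' a'0 aw'.
exists a''; split=> //; split.
- exact: a''0.
- by move=> u /a'a /a''a.
- by move=> k; rewrite a''L a'L.
- exact: le_trans a''g a'g.
Qed.

End CarathS.

Section MI.
Variable R : realType.

Lemma sum_eq1 (T : finType) (c : T) (G : T -> R) :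
  \sum_u (if c == u then G u else 0) = G c.
Proof.
rewrite (bigD1 c) //= eqxx big1 ?addr0 // => u /negbTE; rewrite eq_sym => ->.
by [].
Qed.

Lemma sum_eq1r (T : finType) (c : T) (G : T -> R) :
  \sum_u (if u == c then G u else 0) = G c.
Proof. by rewrite -(sum_eq1 c); apply: eq_bigr => u _; rewrite eq_sym. Qed.

Lemma sum_pair (A B : finType) (G : A * B -> R) :
  \sum_p G p = \sum_a \sum_b G (a, b).
Proof. by rewrite pair_bigA; apply: eq_bigr => -[]. Qed.

Definition term (x r s : R) := if x == 0 then 0 else x * log2 (x / (r * s)).

Definition mi2 (A B : finType) (J : A -> B -> R) :=
  \sum_a \sum_b term (J a b) (\sum_b' J a b') (\sum_a' J a' b).

Definition col (A B : finType) (J : A -> B -> R) b :=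
  \sum_a term (J a b) (\sum_b' J a b') (\sum_a' J a' b).

Lemma mi2_col (A B : finType) (J : A -> B -> R) : mi2 J = \sum_b col J b.
Proof. by rewrite /mi2 exchange_big. Qed.

Lemma minfoE (T A B : finType) (p : T -> R) (f : T -> A) (g : T -> B) :
  minfo p f g = mi2 (fun a b => \sum_(t | (f t == a) && (g t == b)) p t).
Proof.
rewrite /minfo /mi2; apply: eq_bigr => a _; apply: eq_bigr => b _ /=.
have E1 : \sum_(t | f t == a) p t =
    \sum_b' \sum_(t | (f t == a) && (g t == b')) p t.
  by rewrite (partition_big g predT).
have E2 : \sum_(t | g t == b) p t =
    \sum_a' \sum_(t | (f t == a') && (g t == b)) p t.
  rewrite (partition_big f predT) //; apply: eq_bigr => a' _.
  by apply: eq_bigl => t; rewrite andbC.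
by rewrite E1 E2.
Qed.

Lemma term_scale beta x r s :
  term (beta * x) r (beta * s) = beta * term x r s.
Proof.
rewrite /term; have [->|b0] := eqVneq beta 0; first by rewrite !mul0r eqxx.
rewrite mulf_eq0 (negbTE b0) /=; case: eqP => _; first by rewrite mulr0.
have -> : beta * x / (r * (beta * s)) = x / (r * s).
  by rewrite mulrCA invfM mulrACA mulfV // mul1r.
by rewrite mulrA.
Qed.

Lemma col_scale (A B B' : finType) (J : A -> B -> R) (J' : A -> B' -> R) b' b beta :
  (forall a, \sum_c J' a c = \sum_c J a c) -> (forall a, J' a b' = beta * J a b) ->
  col J' b' = beta * col J b.
Proof.
move=> Hr Hc; rewrite /col mulr_sumr; apply: eq_bigr => a _.
rewrite Hr Hc (eq_bigr (fun a' => beta * J a' b)) ?(fun a' _ => Hc a') //.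
by rewrite -mulr_sumr term_scale.
Qed.

Lemma col_indep (A B : finType) (J : A -> B -> R) b gamma :
  \sum_a \sum_c J a c = 1 -> (forall a, J a b = gamma * \sum_c J a c) ->
  col J b = 0.
Proof.
move=> H1 Hc; rewrite /col; apply: big1 => a _.
rewrite [X in term _ _ X](eq_bigr (fun a0 => gamma * \sum_c J a0 c)); last by move=> a0 _; exact: Hc.
rewrite -mulr_sumr H1 mulr1 Hc /term.
case: eqP => // /eqP; rewrite mulf_eq0 negb_or => /andP [g0 s0].
rewrite [(\sum_b0 J a b0) * gamma]mulrC divff ?mulf_neq0 // /log2 ln1 mul0r mulr0 //.
Qed.


Lemma sum_andeq (T : finType) (c : bool) (u0 : T) (G : T -> R) :
  \sum_u (if c && (u == u0) then G u else 0) = if c then G u0 else 0.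
Proof. by case: c; [exact: sum_eq1r | rewrite big1]. Qed.

Definition Sers n (lam : R) (u : 'I_n) (v : 'I_n.+1) : R :=
  (if v == widen_ord (leqnSn n) u then lam else 0) +
  (if v == ord_max then 1 - lam else 0).
Arguments Sers : clear implicits.

Lemma Sers_sum n lam u : \sum_v Sers n lam u v = 1.
Proof. by rewrite big_split /= !sum_eq1r addrC subrK. Qed.

Lemma Sers_ch n lam : 0 <= lam <= 1 -> is_channel (Sers n lam).
Proof.
move=> /andP [l0 l1] u; split; last exact: Sers_sum.
by move=> v; rewrite /Sers; apply: addr_ge0; case: ifP => //; rewrite subr_ge0.
Qed.

Lemma widen_eq n (i u : 'I_n) :
  (widen_ord (leqnSn n) i == widen_ord (leqnSn n) u) = (i == u).
Proof. by rewrite -val_eqE /= val_eqE. Qed.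

Lemma max_neq n (u : 'I_n) : (ord_max == widen_ord (leqnSn n) u) = false.
Proof. by rewrite -val_eqE /= gtn_eqF. Qed.

Lemma mi2_erase (A : finType) n lam (J : A -> 'I_n -> R) :
  \sum_a \sum_u J a u = 1 ->
  mi2 (fun a v => \sum_u J a u * Sers n lam u v) = lam * mi2 J.
Proof.
move=> H1; set J' := fun a v => _.
have Hr : forall a, \sum_v J' a v = \sum_u J a u.
  move=> a; rewrite /J' exchange_big /=; apply: eq_bigr => u _.
  by rewrite -mulr_sumr Sers_sum mulr1.
rewrite !mi2_col big_ord_recr /= mulr_sumr.
rewrite (@col_indep _ _ J' ord_max (1 - lam)); last first.
- move=> a; rewrite Hr /J' mulr_sumr; apply: eq_bigr => u _.
  by rewrite /Sers max_neq eqxx add0r mulrC.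
- by under eq_bigr do rewrite Hr.
rewrite addr0; apply: eq_bigr => i _; apply: col_scale => // a.
rewrite /J' (eq_bigr (fun u => if i == u then lam * J a u else 0)) ?sum_eq1 //.
move=> u _; rewrite /Sers widen_eq.
have -> : (widen_ord (leqnSn n) i == ord_max) = false by rewrite eq_sym max_neq.
by rewrite addr0; case: ifP; rewrite ?mulr0 // mulrC.
Qed.

End MI.

Lemma mi2_ext (R : realType) (A B : finType) (J J' : A -> B -> R) :
  J =2 J' -> mi2 J = mi2 J'.
Proof.
move=> H; rewrite /mi2; apply: eq_bigr => a _; apply: eq_bigr => b _.
rewrite H; congr term; apply: eq_bigr => ? _; exact: H.
Qed.

Section Joint.
Variables (R : realType) (X Y Z : finType) (PX : X -> R) (PYX : X -> Y -> R)
  (PZX : X -> Z -> R).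
Hypotheses (HPX : is_pmf PX) (HPYX : is_channel PYX) (HPZX : is_channel PZX).

Definition W (t : X * Y * Z) : R := let: (x, y, z) := t in PX x * PYX x y * PZX x z.

Lemma joint4E (U : finType) (Q : Y -> U -> R) t u :
  joint4 PX PYX PZX Q (t, u) = W t * Q t.1.2 u.
Proof. by case: t => [[x y] z]. Qed.

Lemma joint5E (U V : finType) (Q : Y -> U -> R) (S : U -> V -> R) t v :
  joint5 PX PYX PZX Q S (t, v) = joint4 PX PYX PZX Q t * S t.2 v.
Proof. by case: t => [[[x y] z] u]. Qed.

Definition Jf (A U : finType) (f : X * Y * Z -> A) (Q : Y -> U -> R) a u :=
  \sum_(t : X * Y * Z * U | (f t.1 == a) && (t.2 == u)) joint4 PX PYX PZX Q t.

Lemma JfE (A U : finType) (f : X * Y * Z -> A) (Q : Y -> U -> R) a u :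
  Jf f Q a u = \sum_(t | f t == a) W t * Q t.1.2 u.
Proof.
rewrite /Jf big_mkcond (eq_bigr (fun t => if (f t.1 == a) && (t.2 == u)
  then W t.1 * Q t.1.1.2 t.2 else 0)); last by move=> [t b] _; rewrite joint4E.
rewrite sum_pair [RHS]big_mkcond /=; apply: eq_bigr => t _.
by rewrite sum_andeq.
Qed.

Lemma sumW : \sum_t W t = 1.
Proof.
rewrite sum_pair sum_pair -(proj2 HPX); apply: eq_bigr => x _.
rewrite -[RHS]mulr1 -(proj2 (HPYX x)) mulr_sumr; apply: eq_bigr => y _ /=.
by rewrite -mulr_sumr (proj2 (HPZX x)) mulr1.
Qed.

Lemma rowJf (A U : finType) (f : X * Y * Z -> A) (Q : Y -> U -> R) a :
  is_channel Q -> \sum_u Jf f Q a u = \sum_(t | f t == a) W t.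
Proof.
move=> HQ; under eq_bigr do rewrite JfE.
rewrite exchange_big /=; apply: eq_bigr => t _.
by rewrite -mulr_sumr (proj2 (HQ _)) mulr1.
Qed.

Lemma totJf (A U : finType) (f : X * Y * Z -> A) (Q : Y -> U -> R) :
  is_channel Q -> \sum_a \sum_u Jf f Q a u = 1.
Proof.
move=> HQ; under eq_bigr do rewrite rowJf //.
by rewrite -sumW [RHS](partition_big f predT).
Qed.

Lemma marg5 (U V : finType) (Q : Y -> U -> R) (S : U -> V -> R)
  (P : pred (X * Y * Z * U)) : is_channel S ->
  \sum_(t : X * Y * Z * U * V | P t.1) joint5 PX PYX PZX Q S t =
  \sum_(t | P t) joint4 PX PYX PZX Q t.
Proof.
move=> HS; rewrite big_mkcond (eq_bigr (fun t => if P t.1 then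
  joint4 PX PYX PZX Q t.1 * S t.1.2 t.2 else 0)); last first.
  by move=> [t v] _; rewrite joint5E.
rewrite sum_pair [RHS]big_mkcond; apply: eq_bigr => t _ /=.
case: (P t); last by rewrite big1.
by rewrite -mulr_sumr (proj2 (HS _)) mulr1.
Qed.

Lemma ZV5 (U V : finType) (Q : Y -> U -> R) (S : U -> V -> R)
  (A : finType) (f : X * Y * Z -> A) a v :
  \sum_(t : X * Y * Z * U * V | (f t.1.1 == a) && (t.2 == v))
     joint5 PX PYX PZX Q S t = \sum_u Jf f Q a u * S u v.
Proof.
rewrite big_mkcond (eq_bigr (fun t => if (f t.1.1 == a) && (t.2 == v) then
  joint4 PX PYX PZX Q t.1 * S t.1.2 t.2 else 0)); last first.
  by move=> [t w] _; rewrite joint5E.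
rewrite sum_pair /=.
under eq_bigr do rewrite sum_andeq.
rewrite -big_mkcond (partition_big (fun t : X * Y * Z * U => t.2) predT) //=.
apply: eq_bigr => u _; rewrite /Jf mulr_suml; apply: eq_bigr => t.
by case/andP => _ /eqP ->.
Qed.


Lemma I4 (A U : finType) (f : X * Y * Z -> A) (Q : Y -> U -> R) :
  minfo (joint4 PX PYX PZX Q) (fun t => f t.1) (fun t => t.2) = mi2 (Jf f Q).
Proof. exact: minfoE. Qed.

Lemma I5 (A U V : finType) (f : X * Y * Z -> A) (Q : Y -> U -> R)
  (S : U -> V -> R) : is_channel S ->
  minfo (joint5 PX PYX PZX Q S) (fun t => f t.1.1) (fun t => t.1.2) = mi2 (Jf f Q).
Proof.
move=> HS; rewrite minfoE; apply: mi2_ext => a b.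
exact: (marg5 Q (fun t4 => (f t4.1 == a) && (t4.2 == b)) HS).
Qed.

Lemma IZV5 (U V : finType) (Q : Y -> U -> R) (S : U -> V -> R) :
  minfo (joint5 PX PYX PZX Q S) (fun t => t.1.1.2) (fun t => t.2) =
  mi2 (fun a v => \sum_u Jf (fun t => t.2) Q a u * S u v).
Proof.
rewrite minfoE; apply: mi2_ext => a v; exact: (ZV5 Q S (fun t => t.2)).
Qed.

Definition PY y := \sum_x PX x * PYX x y.

Lemma PY0 y x : PY y = 0 -> PX x * PYX x y = 0.
Proof.
move=> H; apply: (psumr_eq0P _ H) => // x' _.
by rewrite mulr_ge0 // ?(proj1 HPX) ?(proj1 (HPYX x')).
Qed.

Lemma PY_ge0 y : 0 <= PY y.
Proof. by apply: sumr_ge0 => x _; rewrite mulr_ge0 // ?(proj1 HPX) ?(proj1 (HPYX x)). Qed.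

Lemma W0 t : PY t.1.2 = 0 -> W t = 0.
Proof. by case: t => [[x y] z] /= H; rewrite (PY0 x H) mul0r. Qed.

Lemma sumPY : \sum_y PY y = 1.
Proof.
rewrite /PY exchange_big -(proj2 HPX) /=; apply: eq_bigr => x _.
by rewrite -mulr_sumr (proj2 (HPYX x)) mulr1.
Qed.

Lemma reduce (nU : nat) (Q : Y -> 'I_nU -> R) : is_channel Q ->
  exists m (Q' : Y -> 'I_m -> R), [/\ (m <= #|Y| + 2)%N, is_channel Q',
     mi2 (Jf (fun t => t.2) Q') = mi2 (Jf (fun t => t.2) Q),
     mi2 (Jf (fun t => t.1.1) Q') = mi2 (Jf (fun t => t.1.1) Q) &
     mi2 (Jf (fun t => t.1.2) Q') <= mi2 (Jf (fun t => t.1.2) Q)].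
Proof.
move=> HQ.
pose cz := col (Jf (fun t => t.2) Q).
pose cx := col (Jf (fun t => t.1.1) Q).
pose cy := col (Jf (fun t => t.1.2) Q).
pose Pu u := \sum_y PY y * Q y u.
pose L (k : option (option Y)) u := match k with
  | Some (Some y) => PY y * Q y u | Some None => cz u | None => cx u end.
have Hw : forall d : 'I_nU -> R, (forall k, \sum_u L k u * d u = 0) ->
    \sum_u Pu u * d u = 0.
  move=> d Hd; under eq_bigr do rewrite mulr_suml.
  by rewrite exchange_big big1 // => y _; exact: (Hd (Some (Some y))).
have Pu0 : forall u, 0 <= Pu u.
  by move=> u; apply: sumr_ge0 => y _; rewrite mulr_ge0 ?PY_ge0 ?(proj1 (HQ y)).
pose al u : R := if Pu u == 0 then 0 else 1.
have al0 : forall u, 0 <= al u by move=> u; rewrite /al; case: ifP.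
have alw : forall u, al u != 0 -> 0 < Pu u.
  by move=> u; rewrite /al lt_def Pu0 andbT; case: (Pu u =P 0) => [_|/eqP H]; rewrite ?eqxx.
have PuQ : forall u y, Pu u = 0 -> PY y * Q y u = 0.
  move=> u y H; apply: (psumr_eq0P _ H) => // y' _.
  by rewrite mulr_ge0 ?PY_ge0 ?(proj1 (HQ y')).
have colJ0 : forall (A : finType) (f : X * Y * Z -> A) u, Pu u = 0 ->
    col (Jf f Q) u = 0.
  move=> A f u H; apply: big1 => a _; rewrite JfE big1 /term ?eqxx // => t _.
  have := PuQ u t.1.2 H; move/eqP; rewrite mulf_eq0 => /orP [/eqP/W0 ->|/eqP ->].
    by rewrite mul0r.
  by rewrite mulr0.
have sumal : forall F : 'I_nU -> R, (forall u, Pu u = 0 -> F u = 0) ->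
    \sum_u F u * al u = \sum_u F u.
  move=> F HF; apply: eq_bigr => u _; rewrite /al; case: eqP => [/HF ->|_].
    by rewrite mulr0.
  by rewrite mulr1.
have [a' [[a'0 a'a a'L a'g] Hc]] := carath cy Hw al0 alw.
set Sa := supp a' in Hc.
set m := #|Sa| in Hc.
have reidx : forall F : 'I_nU -> R, (forall u, a' u = 0 -> F u = 0) ->
    \sum_(i < m) F (enum_val i) = \sum_u F u.
  move=> F HF; rewrite -big_enum_val big_mkcond; apply: eq_bigr => u _.
  by case: ifP => //; rewrite inE => /negbFE/eqP/HF ->.
have Ly : forall y, \sum_u Q y u * a' u = 1 \/ PY y = 0.
  move=> y; case: (eqVneq (PY y) 0) => [->|nz]; [by right | left].
  have := a'L (Some (Some y)); rewrite /L sumal; last by move=> u /(PuQ u y).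
  rewrite -mulr_sumr (proj2 (HQ y)) mulr1.
  under eq_bigr do rewrite -mulrA; rewrite -mulr_sumr => E.
  by apply: (mulfI nz); rewrite E mulr1.
have m0 : (0 < m)%N.
  rewrite lt0n; apply/negP => /eqP m0.
  have a'z : forall u, a' u = 0.
    move=> u; move/eqP: m0; rewrite cards_eq0 => /eqP S0.
    apply/eqP/negPn/negP => nz.
    have : u \in Sa by rewrite /Sa /supp inE.
    by rewrite S0 inE.
  have : \sum_y PY y = 0.
    apply: big1 => y _; case: (Ly y) => //.
    have Z0 : \sum_u Q y u * a' u = 0 by apply: big1 => u _; rewrite a'z mulr0.
    by rewrite Z0 => /esym/eqP; rewrite oner_eq0.
  by rewrite sumPY; move/eqP; rewrite oner_eq0.
pose Q' (y : Y) (i : 'I_m) : R :=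
  if PY y == 0 then m%:R^-1 else a' (enum_val i) * Q y (enum_val i).
have HQ' : is_channel Q'.
  move=> y; split.
    by move=> i; rewrite /Q'; case: ifP => _; rewrite ?invr_ge0 ?ler0n // mulr_ge0 ?(proj1 (HQ y)).
  rewrite /Q'; case: eqP => [_|nz].
    by rewrite sumr_const card_ord -[X in X = 1]mulr_natr mulVf // pnatr_eq0 -lt0n.
  rewrite (reidx (fun u => a' u * Q y u)); last by move=> u ->; rewrite mul0r.
  case: (Ly y) => // <-; by apply: eq_bigr => u _; rewrite mulrC.
have JQ' : forall (A : finType) (f : X * Y * Z -> A) a i,
    Jf f Q' a i = a' (enum_val i) * Jf f Q a (enum_val i).
  move=> A f a i; rewrite !JfE mulr_sumr; apply: eq_bigr => t _.
  rewrite /Q'; case: eqP => [/W0 ->|_]; first by rewrite !mul0r mulr0.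
  by rewrite mulrCA.
have miQ' : forall (A : finType) (f : X * Y * Z -> A),
    mi2 (Jf f Q') = \sum_u col (Jf f Q) u * a' u.
  move=> A f; rewrite mi2_col.
  rewrite (eq_bigr (fun i => a' (enum_val i) * col (Jf f Q) (enum_val i))).
    rewrite (reidx (fun u => a' u * col (Jf f Q) u)); last by move=> u ->; rewrite mul0r.
    by apply: eq_bigr => u _; rewrite mulrC.
  by move=> i _; apply: col_scale => a; rewrite ?JQ' // !rowJf.
have miQ : forall (A : finType) (f : X * Y * Z -> A),
    mi2 (Jf f Q) = \sum_u col (Jf f Q) u * al u.
  by move=> A f; rewrite mi2_col sumal // => u /colJ0.
exists m, Q'; split => //.
- by move: Hc; rewrite !card_option addn2.
- by rewrite miQ' miQ; exact: (a'L (Some None)).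
- by rewrite miQ' miQ; exact: (a'L None).
- by rewrite miQ' miQ; exact: a'g.
Qed.

End Joint.

Theorem mainTheorem2 (R : realType) (X Y Z : finType)
  (PX : X -> R) (PYX : X -> Y -> R) (PZX : X -> Z -> R) :
  is_pmf PX -> is_channel PYX -> is_channel PZX ->
  forall RI RS RJ RL : R,
    A1 PX PYX PZX RI RS RJ RL <-> A2 PX PYX PZX RI RS RJ RL.
Proof.
move=> HPX HPYX HPZX RI RS RJ RL; split.
- case=> nU [Q [HnU [HQ H]]]; cbv zeta in H.
  rewrite (I4 PX PYX PZX (fun t => t.2) Q) (I4 PX PYX PZX (fun t => t.1.2) Q)
    (I4 PX PYX PZX (fun t => t.1.1) Q) in H.
  case: H => h1 h2 h3 h4 h5.
  set IZ := mi2 (Jf PX PYX PZX (fun t => t.2) Q) in h1 h2 h3.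
  pose lam := RI / IZ.
  have Hl : lam * IZ = RI.
    case: (eqVneq IZ 0) => [IZ0|nz]; last by rewrite divfK.
    by rewrite IZ0 mulr0; rewrite IZ0 in h1; lra.
  have l01 : 0 <= lam <= 1.
    case: (eqVneq IZ 0) => [IZ0|nz]; first by rewrite /lam IZ0 invr0 mulr0 lexx ler01.
    have IZp : 0 < IZ by rewrite lt_def nz /=; lra.
    apply/andP; split; first by apply: divr_ge0; lra.
    by rewrite /lam ler_pdivrMr // mul1r; lra.
  exists nU, nU.+1, Q, (@Sers R nU lam).
  split; [|split; [|split; [|split]]] => //.
  + apply: leq_trans HnU _; apply: leq_pmulr; by rewrite addn3.
  + by rewrite addnS ltnS.
  + exact: Sers_ch.
  + cbv zeta.
    have HS := @Sers_ch R nU lam l01.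
    rewrite (IZV5 PX PYX PZX Q (@Sers R nU lam)) mi2_erase; last exact: totJf.
    rewrite (I5 PX PYX PZX (fun t => t.2) Q HS) (I5 PX PYX PZX (fun t => t.1.2) Q HS)
      (I5 PX PYX PZX (fun t => t.1.1) Q HS) -/IZ Hl.
    by split => //; rewrite ?lexx ?h4 ?h5 /=; lra.
- case=> nU [nV [Q [S [HnU [HnV [HQ [HS H]]]]]]]; cbv zeta in H.
  rewrite (IZV5 PX PYX PZX Q S) (I5 PX PYX PZX (fun t => t.2) Q HS)
    (I5 PX PYX PZX (fun t => t.1.2) Q HS) (I5 PX PYX PZX (fun t => t.1.1) Q HS) in H.
  case: H => /andP [h1 h2] /andP [h3 h4] h5 h6.
  have [m [Q' [Hm HQ' Ez Ex Ey]]] := reduce PZX HPX HPYX HQ.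
  exists m, Q'; split => //; split => //; cbv zeta.
  rewrite (I4 PX PYX PZX (fun t => t.2) Q') (I4 PX PYX PZX (fun t => t.1.2) Q')
    (I4 PX PYX PZX (fun t => t.1.1) Q') Ez Ex.
  split; lra.
Qed.
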